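(* Let $K$ be a field and $T$ a ring extension of $K$. If $V$ is a maximal subring of $T$ which is integrally closed in $T$ and $K\not\subseteq V$, then $V\cap K$ is a maximal subring of $K$; in particular, $V\cap K$ is a one-dimensional valuation domain.
   Context: All rings are commutative with $1\neq0$ and subrings are unital. A maximal subring is a proper subring maximal with respect to inclusion among proper subrings. *)

(* Defs.v *)
From HB Require Import structures.
From mathcomp Require Import all_boot all_order all_algebra.
Set Implicit Arguments. Unset Strict Implicit. Unset Printing Implicit Defensive.
Import GRing.Theory.
Local Open Scope ring_scope.

Section Defs.
Variable T : comNzRingType.

Definition is_subring (S : T -> Prop) : Prop :=
  [/\ S 1, (forall x y, S x -> S y -> S (x - y)) &
      (forall x y, S x -> S y -> S (x * y))].

Definition subring_of (S U : T -> Prop) : Prop :=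
  is_subring S /\ (forall x, S x -> U x).

Definition proper_in (S U : T -> Prop) : Prop := exists x, U x /\ ~ S x.

Definition maximal_subring_of (S U : T -> Prop) : Prop :=
  [/\ subring_of S U, proper_in S U &
      forall S', subring_of S' U -> proper_in S' U ->
        (forall x, S x -> S' x) -> forall x, S' x -> S x].

Definition is_subfield (K : T -> Prop) : Prop :=
  is_subring K /\ forall x, K x -> x != 0 -> exists2 y, K y & x * y = 1.

Definition integral_over (V : T -> Prop) (x : T) : Prop :=
  exists p : {poly T}, [/\ p \is monic, (forall i, V p`_i) & root p x].

Definition integrally_closed_in_T (V : T -> Prop) : Prop :=
  forall x, integral_over V x -> V x.

Definition inter (A B : T -> Prop) : T -> Prop := fun x => A x /\ B x.

Definition valuation_domain (A : T -> Prop) : Prop :=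
  (forall a b, A a -> A b -> a * b = 0 -> a = 0 \/ b = 0) /\
  (forall a b, A a -> A b ->
     (exists2 c, A c & b = a * c) \/ (exists2 c, A c & a = b * c)).

Definition prime_ideal_of (A P : T -> Prop) : Prop :=
  [/\ (forall x, P x -> A x), P 0,
      (forall x y, P x -> P y -> P (x + y)) &
      (forall a x, A a -> P x -> P (a * x))] /\
  (~ P 1 /\ (forall x y, A x -> A y -> P (x * y) -> P x \/ P y)).

Definition strict_sub (P Q : T -> Prop) : Prop :=
  (forall x, P x -> Q x) /\ exists x, Q x /\ ~ P x.

Definition krull_dim_one (A : T -> Prop) : Prop :=
  (exists P Q, [/\ prime_ideal_of A P, prime_ideal_of A Q & strict_sub P Q]) /\
  ~ (exists P Q R, [/\ prime_ideal_of A P, prime_ideal_of A Q, prime_ideal_of A R,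
                      strict_sub P Q & strict_sub Q R]).
End Defs.

(* Main.v *)
Require Import Defs.
From HB Require Import structures.
From mathcomp Require Import all_boot all_order all_algebra.
From mathcomp Require Import zify ring.
From Stdlib Require Import Classical.
Import GRing.Theory.
Local Open Scope ring_scope.

Section Helpers.
Set Implicit Arguments. Unset Strict Implicit.
Variable T : comNzRingType.
Implicit Types V : T -> Prop.

Lemma sr0 V : is_subring V -> V 0.
Proof. by case=> V1 VB _; rewrite -(subrr (1 : T)); apply: VB. Qed.

Lemma srN V x : is_subring V -> V x -> V (- x).
Proof. move=> HV Vx; rewrite -sub0r; case: (HV) => _ VB _; apply: VB => //; exact: sr0. Qed.

Lemma srD V x y : is_subring V -> V x -> V y -> V (x + y).
Proof.
move=> HV Vx Vy; rewrite -[y]opprK; case: (HV) => _ VB _; apply: VB => //; exact: srN.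
Qed.

Lemma srB V x y : is_subring V -> V x -> V y -> V (x - y).
Proof. by case=> _ VB _; apply: VB. Qed.

Lemma srM V x y : is_subring V -> V x -> V y -> V (x * y).
Proof. by case=> _ _ VM; apply: VM. Qed.

Lemma sr1 V : is_subring V -> V 1.
Proof. by case. Qed.

Lemma sr_sum V (I : Type) (r : seq I) (P : pred I) (F : I -> T) :
  is_subring V -> (forall i, P i -> V (F i)) -> V (\sum_(i <- r | P i) F i).
Proof.
move=> HV HF; apply: (big_ind V) => //; [exact: sr0 | move=> a b; exact: srD].
Qed.

Lemma srX V x n : is_subring V -> V x -> V (x ^+ n).
Proof.
move=> HV Vx; elim: n => [|n IH]; first by rewrite expr0; exact: sr1.
by rewrite exprS; apply: srM.
Qed.

Lemma sr_nat V (b : bool) : is_subring V -> V b%:R.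
Proof. by move=> HV; case: b; rewrite ?mulr1n ?mulr0n; [exact: sr1 | exact: sr0]. Qed.

Lemma sr_horner V (p : {poly T}) x :
  is_subring V -> (forall i, V p`_i) -> V x -> V p.[x].
Proof.
move=> HV Hp Vx; rewrite horner_coef; apply: sr_sum => // i _.
by apply: srM => //; apply: srX.
Qed.

Definition adjoin V x : T -> Prop :=
  fun y => exists2 p : {poly T}, (forall i, V p`_i) & y = p.[x].

Lemma adjoin_subring V x : is_subring V -> is_subring (adjoin V x).
Proof.
move=> HV; split.
- exists 1; last by rewrite hornerC.
  by move=> i; rewrite coefC; case: (i == 0)%N; [exact: sr1 | exact: sr0].
- move=> a b [p Hp ->] [q Hq ->]; exists (p - q); last by rewrite hornerD hornerN.
  by move=> i; rewrite coefB; apply: srB.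
- move=> a b [p Hp ->] [q Hq ->]; exists (p * q); last by rewrite hornerM.
  by move=> i; rewrite coefM; apply: sr_sum => // j _; apply: srM.
Qed.

Lemma adjoin_V V x y : is_subring V -> V y -> adjoin V x y.
Proof.
move=> HV Vy; exists y%:P; last by rewrite hornerC.
by move=> i; rewrite coefC; case: (i == 0)%N => //; exact: sr0.
Qed.

Lemma adjoin_x V x : is_subring V -> adjoin V x x.
Proof.
move=> HV; exists 'X; last by rewrite hornerX.
by move=> i; rewrite coefX; apply: sr_nat.
Qed.

Lemma rev_lemma V (p : {poly T}) t x : is_subring V ->
  (forall i, V p`_i) -> t * x = 1 ->
  exists r : {poly T}, [/\ forall i, V r`_i, (size r <= (size p).+1)%N &
                          p.[t] * x ^+ size p = r.[x]].
Proof.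
move=> HV Hp tx; set n := size p.
exists (\sum_(i < n) (p`_i)%:P * 'X^(n - i)); split.
- move=> j; rewrite coef_sum; apply: sr_sum => // i _.
  by rewrite coefCM coefXn; apply: srM => //; apply: sr_nat.
- apply/leq_sizeP => j hj; rewrite coef_sum big1 // => i _.
  rewrite coefCM coefXn gtn_eqF ?mulr0 //.
  have := ltn_ord i; lia.
- rewrite horner_coef -/n mulr_suml horner_sum; apply: eq_bigr => i _.
  rewrite hornerM hornerC hornerXn.
  have -> : x ^+ n = x ^+ i * x ^+ (n - i) by rewrite -exprD subnKC // ltnW.
  rewrite mulrA -(mulrA _ (t ^+ i)).
  by rewrite -exprMn tx expr1n mulr1.
Qed.

Lemma inv_integral V (p : {poly T}) x t : is_subring V ->
  (forall i, V p`_i) -> x * t = 1 -> x = p.[t] -> integral_over V x.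
Proof.
move=> HV Hp xt xp.
have tx : t * x = 1 by rewrite mulrC.
have [r [Hr sr Er]] := @rev_lemma V p t x HV Hp tx.
exists ('X^((size p).+1) - r); split.
- apply/monicP; rewrite lead_coefDl ?lead_coefXn //.
  by rewrite size_polyN size_polyXn.
- by move=> i; rewrite coefB coefXn; apply: srB => //; apply: sr_nat.
- by rewrite /root hornerD hornerN hornerXn exprS {1}xp Er subrr.
Qed.

Lemma maxV V x : maximal_subring_of V (fun _ => True) -> ~ V x ->
  forall y, adjoin V x y.
Proof.
case=> [[HV _] _ Hmax] nVx y; apply: NNPP => ny; apply: nVx.
apply: (Hmax (adjoin V x) _ _ _ x (adjoin_x x HV)).
- by split => //; apply: adjoin_subring.
- by exists y.
- by move=> z; apply: adjoin_V.
Qed.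

Lemma F1 V x y : maximal_subring_of V (fun _ => True) ->
  integrally_closed_in_T V -> x * y = 1 -> ~ V y -> V x.
Proof.
move=> HM HIC xy nVy; have HV : is_subring V by case: HM => [[]].
have [p Hp xp] := maxV HM nVy x.
by apply: HIC; apply: (inv_integral HV Hp xy xp).
Qed.

Lemma pow_prime (A Q : T -> Prop) r n : is_subring A -> prime_ideal_of A Q ->
  A r -> Q (r ^+ n) -> Q r.
Proof.
move=> HA [_ [nQ1 Qpr]] Ar; elim: n => [|n IH]; first by rewrite expr0.
rewrite exprS => H; have [] := Qpr _ _ Ar (srX n HA Ar) H => //; exact: IH.
Qed.

End Helpers.

Theorem lemma3p2 (T : comNzRingType) (K V : T -> Prop) :
  is_subfield K ->
  maximal_subring_of V (fun _ => True) ->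
  integrally_closed_in_T V ->
  ~ (forall x, K x -> V x) ->
  maximal_subring_of (inter V K) K /\
  valuation_domain (inter V K) /\ krull_dim_one (inter V K).
Proof.
move=> [HKs Kinv] HM HIC nKV.
have HV : is_subring V by case: HM => [[]].
set W := inter V K.
have HW : is_subring W.
  split; first by split; apply: sr1.
  - by move=> x y [? ?] [? ?]; split; apply: srB.
  - by move=> x y [? ?] [? ?]; split; apply: srM.
have W0 : W 0 by split; apply: sr0.
have [k [Kk nVk]] : exists k, K k /\ ~ V k.
  apply: NNPP => H; apply: nKV => x Kx; apply: NNPP => nVx; apply: H; by exists x.
have Wdom : forall a b, W a -> W b -> a * b = 0 -> a = 0 \/ b = 0.
  move=> a b [_ Ka] _ hab; case: (eqVneq a 0) => [->|na]; [by left | right].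
  have [a' Ka' aa'] := Kinv a Ka na.
  have : a' * (a * b) = 0 by rewrite hab mulr0.
  by rewrite mulrA (mulrC a') aa' mul1r.
have Wtot : forall a b, W a -> W b ->
    (exists2 c, W c & b = a * c) \/ (exists2 c, W c & a = b * c).
  move=> a b [Va Ka] [Vb Kb]; case: (eqVneq a 0) => [->|na].
    by right; exists 0 => //; rewrite mulr0.
  have [a' Ka' aa'] := Kinv a Ka na.
  have Kc : K (a' * b) by apply: srM.
  case: (classic (V (a' * b))) => Vc.
    by left; exists (a' * b) => //; rewrite mulrA aa' mul1r.
  have nc : a' * b != 0 by apply/eqP => e; apply: Vc; rewrite e; apply: sr0.
  have [d Kd cd] := Kinv _ Kc nc.
  have dc : d * (a' * b) = 1 by rewrite mulrC.
  have Vd : V d := F1 HM HIC dc Vc.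
  right; exists d => //.
  have -> : a = a * (a' * b * d) by rewrite cd mulr1.
  have -> : a * (a' * b * d) = (a * a') * (b * d) by ring.
  by rewrite aa' mul1r.
split; last split.
-
  split.
  + by split => // x [].
  + by exists k; split => // -[].
  + move=> S' [HS' S'K] [z [Kz nS'z]] sWS' s S's.
    apply: NNPP => nWs; exfalso; apply: nS'z.
    have Ks := S'K s S's.
    have nVs : ~ V s by move=> Vs; apply: nWs.
    have ns0 : s != 0 by apply/eqP => e; apply: nVs; rewrite e; apply: sr0.
    have [t Kt st] := Kinv s Ks ns0.
    have [p Hp zp] := maxV HM nVs z.
    have ts : t * s = 1 by rewrite mulrC.
    have Vt : V t := F1 HM HIC ts nVs.
    have [r [Hr _ Er]] := rev_lemma HV Hp st.
    have Wzt : W (z * t ^+ size p).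
      split; first by rewrite zp Er; apply: sr_horner.
      by apply: srM => //; apply: srX.
    have -> : z = (z * t ^+ size p) * s ^+ size p.
      by rewrite -mulrA -exprMn ts expr1n mulr1.
    by apply: srM => //; [apply: sWS' | apply: srX].
- by split.
- set M := fun x => W x /\ ~ (exists2 u, W u & x * u = 1).
  have M0 : M 0.
    split => //; case=> u _; rewrite mul0r => /eqP; rewrite eq_sym oner_eq0 //.
  split.
  + exists (fun x => x = 0), M; split.
    * split; [split | split].
      - by move=> x ->.
      - by [].
      - by move=> x y -> ->; rewrite addr0.
      - by move=> a x _ ->; rewrite mulr0.
      - by apply/eqP; exact: oner_neq0.
      - move=> x y Wx Wy; exact: Wdom.
    * split; [split | split].
      - by move=> x [].
      - exact: M0.
      - move=> x y [Wx nx] [Wy ny]; split; first exact: srD.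
        case: (Wtot x y Wx Wy) => [[c Wc ->] | [c Wc ->]] [u Wu hu].
          apply: nx; exists ((1 + c) * u); last by rewrite mulrA mulrDr mulr1.
          by apply: srM => //; apply: srD => //; exact: sr1.
        apply: ny; exists ((c + 1) * u); last by rewrite mulrA mulrDr mulr1.
        by apply: srM => //; apply: srD => //; exact: sr1.
      - move=> a x Wa [Wx nx]; split; first exact: srM.
        case=> u Wu hu; apply: nx; exists (a * u); first exact: srM.
        by rewrite mulrCA mulrA.
      - case=> _ []; exists 1; [exact: sr1 | by rewrite mulr1].
      - move=> x y Wx Wy [Wxy nxy].
        case: (classic (exists2 u, W u & x * u = 1)) => [[u Wu xu]|nx]; last by left.
        case: (classic (exists2 v, W v & y * v = 1)) => [[v Wv yv]|ny]; last by right.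
        exfalso; apply: nxy; exists (u * v); first exact: srM.
        by rewrite mulrACA xu yv mulr1.
    * split; first by move=> x ->.
      have nk0 : k != 0 by apply/eqP => e; apply: nVk; rewrite e; apply: sr0.
      have [t Kt kt] := Kinv k Kk nk0.
      have tk : t * k = 1 by rewrite mulrC.
      have Vt : V t := F1 HM HIC tk nVk.
      exists t; split.
        split; first by split.
        case=> u [Vu Ku] tu; apply: nVk.
        have <- : u = k by rewrite -[u]mul1r -kt -mulrA tu mulr1.
        exact: Vu.
      move=> t0; move: kt; rewrite t0 mulr0 => /eqP; rewrite eq_sym oner_eq0 //.
  + case=> P [Q [R [HP HQ HR [_ [x [Qx nPx]]] [_ [y [Ry nQy]]]]]].
    apply: nQy.
    case: HP => [[_ P0 _ _] _].
    case: (HQ) => [[QW Q0 QD QM] _].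
    case: HR => [[RW R0 RD RM] [nR1 _]].
    have [Vy Ky] := RW y Ry.
    have [Vx Kx] := QW x Qx.
    have nx0 : x != 0 by apply/eqP => e; apply: nPx; rewrite e.
    case: (eqVneq y 0) => [-> | ny0] //.
    have [yi Kyi yyi] := Kinv y Ky ny0.
    have nVyi : ~ V yi.
      move=> Vyi; apply: nR1; rewrite -yyi mulrC; apply: RM => //.
    have [xi Kxi xxi] := Kinv x Kx nx0.
    have [p Hp xip] := maxV HM nVyi xi.
    have yiy : yi * y = 1 by rewrite mulrC.
    have [g [Hg _ Eg]] := rev_lemma HV Hp yiy.
    have Wa : W (xi * y ^+ size p).
      split; first by rewrite xip Eg; apply: sr_horner.
      by apply: srM => //; apply: srX.
    apply: (pow_prime (n := size p) HW HQ) => //.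
    have -> : y ^+ size p = (xi * y ^+ size p) * x.
      by rewrite mulrC mulrA xxi mul1r.
    exact: QM.
Qed.
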